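(* Let $\mathfrak g$ be a $9$-dimensional filiform Lie algebra with associated triple $(5,6,9)$, with parameters $\alpha_1,\alpha_2,\gamma_1,\gamma_2,\beta_{12},\beta_{22},\beta_{13},\beta_{23},\beta_{33}$ with respect to an adapted basis $\{e_h\}$. Then $\alpha_1=0$, $(2\alpha_2+3\gamma_1)(\alpha_2-\gamma_1)=0$ and $\gamma_1\ne0$; moreover $[C^3\mathfrak g,C^3\mathfrak g]=[C^3\mathfrak g,C^4\mathfrak g]=\langle e_2\rangle$, $[C^3\mathfrak g,C^5\mathfrak g]=\{0\}$, $[C^2\mathfrak g,C^6\mathfrak g]=\{0\}$, $[C^2\mathfrak g,C^5\mathfrak g]=\langle e_2\rangle$, $[C^2\mathfrak g,C^4\mathfrak g]=\langle e_2,e_3\rangle$, $[C^2\mathfrak g,C^2\mathfrak g]=[C^2\mathfrak g,C^3\mathfrak g]=\langle e_2,e_3,e_4\rangle$. Consequently every such $\mathfrak g$ has the same Hilbert polynomial: $$\mathrm{HP}_{\mathfrak g}-\mathrm{HP}^{(0)}_{\mathfrak g}=3(t^2s^2+t^2s^3+t^3s^2)+2(t^2s^4+t^4s^2)+(t^2s^5+t^5s^2)+(t^3s^3+t^3s^4+t^4s^3).$$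
   Context: All Lie algebras are over $\mathbb C$; $C^1\mathfrak g=\mathfrak g$, $C^k\mathfrak g=[C^{k-1}\mathfrak g,\mathfrak g]$. A Lie algebra is filiform if $\dim\mathfrak g=n\ge2$ and $\dim C^k\mathfrak g=n-k$ for $2\le k\le n$. An adapted basis of a filiform $\mathfrak g$ is a basis $\{e_1,\dots,e_n\}$ with $[e_1,e_h]=e_{h-1}$ ($3\le h\le n$), $[e_2,e_h]=0$ ($1\le h\le n$), $[e_3,e_h]=0$ ($2\le h\le n$); then $C^k\mathfrak g=\langle e_2,\dots,e_{n-k+1}\rangle$. For non-model filiform $\mathfrak g$, $z_1=\min\{k\ge4:[e_k,e_n]\ne0\}$, $z_2=\min\{k\ge4:[e_k,e_{k+1}]\ne0\}$ (in any adapted basis) are invariants; $(z_1,z_2,n)$ is the associated triple. $P_h(u)$ is the $h$-th coordinate of $u$ in $\{e_h\}$. General law (known result) for triple $(z_1,z_2,n)$: there are complex numbers $\alpha_i$ ($1\le i\le z_2-z_1+1$), $\gamma_j$ ($1\le j\le n-z_2-1$), $\beta_{k\ell}$ ($2\le\ell\le n-z_2$, $1\le k<z_2-z_1+\ell$), the parameters, with $[e_1,e_h]=e_{h-1}$; $[e_{z_1+i},e_{z_2+1}]=\alpha_1e_{i+2}+\dots+\alpha_{i+1}e_2$ ($0\le i\le z_2-z_1$); $[e_{z_1},e_{z_2+j}]=\alpha_1e_{j+1}+\gamma_1e_j+\dots+\gamma_{j-1}e_2$ ($2\le j\le n-z_2$); $[e_{z_1+k},e_{z_2+\ell}]=\sum_{h=2}^{k+\ell}P_h([e_{z_1+k-1},e_{z_2+\ell}]+[e_{z_1+k},e_{z_2+\ell-1}])e_{h+1}+\beta_{k\ell}e_2$;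 all other brackets $[e_a,e_b]$, $2\le a<b$, zero. For $(5,6,9)$ the parameters are $\alpha_1,\alpha_2,\gamma_1,\gamma_2,\beta_{12},\beta_{22},\beta_{13},\beta_{23},\beta_{33}$. Hilbert polynomial: $\mathrm{HP}_{\mathfrak g}(t,s)=\sum_{k,\ell\ge1}\dim[C^k\mathfrak g,C^\ell\mathfrak g]\,t^ks^\ell$; $\mathrm{HP}^{(0)}_{\mathfrak g}=(n-2)ts+\sum_{2\le k\le n-2}(n-k-1)(t^ks+ts^k)$. *)

(* Defs.v *)
(* Lie algebras over C (modelled by an arbitrary
   numClosedFieldType), finite-dimensional via vector.v. *)
From HB Require Import structures.
From mathcomp Require Import all_boot all_order all_algebra.
From mathcomp Require Import mpoly.
Set Implicit Arguments. Unset Strict Implicit. Unset Printing Implicit Defensive.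
Import Order.TTheory GRing.Theory Num.Theory.
Local Open Scope ring_scope.

Section LieDefs.
Variables (C : numClosedFieldType) (V : vectType C).
Implicit Types (f : V -> V -> V).

Definition is_lie_bracket f : Prop :=
  [/\ (forall (c : C) x y z, f (c *: x + y) z = c *: f x z + f y z),
      (forall (c : C) x y z, f x (c *: y + z) = c *: f x y + f x z),
      (forall x, f x x = 0)
    & (forall x y z, f x (f y z) + f y (f z x) + f z (f x y) = 0)].

(* [U, W] = span of all [u, w], u in U, w in W (by bilinearity, the span of
   the brackets of basis vectors). *)
Definition brsp f (U W : {vspace V}) : {vspace V} :=
  (<< [seq f u w | u <- vbasis U, w <- vbasis W] >>)%VS.

(* lcs_aux f m = C^{m+1} g *)
Fixpoint lcs_aux f (m : nat) : {vspace V} :=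
  if m is m'.+1 then brsp f (lcs_aux f m') fullv else fullv.

(* C^k g, k >= 1 (C^1 g = g) *)
Definition lcs f (k : nat) : {vspace V} := lcs_aux f k.-1.

(* 1-based basis vectors e_h and coordinates P_h w.r.t. a basis tuple. *)
Definition bvec n (eb : n.-tuple V) (h : nat) : V := nth 0 eb h.-1.
Definition bcoord n (eb : n.-tuple V) (h : nat) (u : V) : C :=
  oapp (fun i : 'I_n => coord eb i u) 0 (insub h.-1).

Definition filiform f (n : nat) : Prop :=
  (2 <= n)%N /\ \dim (fullv : {vspace V}) = n /\
  forall k, (2 <= k <= n)%N -> \dim (lcs f k) = (n - k)%N.

Definition adapted_basis f n (eb : n.-tuple V) : Prop :=
  let e := bvec eb in
  [/\ basis_of fullv eb,
      (forall h, (3 <= h <= n)%N -> f (e 1%N) (e h) = e h.-1),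
      (forall h, (1 <= h <= n)%N -> f (e 2%N) (e h) = 0)
    & (forall h, (2 <= h <= n)%N -> f (e 3%N) (e h) = 0)].

Definition is_z1 f n (eb : n.-tuple V) (z : nat) : Prop :=
  let e := bvec eb in
  [/\ (4 <= z)%N, f (e z) (e n) != 0
    & forall k, (4 <= k < z)%N -> f (e k) (e n) = 0].

Definition is_z2 f n (eb : n.-tuple V) (z : nat) : Prop :=
  let e := bvec eb in
  [/\ (4 <= z)%N, f (e z) (e z.+1) != 0
    & forall k, (4 <= k < z)%N -> f (e k) (e k.+1) = 0].

(* pairs (x,y), x<y, whose bracket is prescribed by the general law
   (besides [e_1, _]) *)
Definition law_pair (z1 z2 n x y : nat) : bool :=
  ((z1 <= x <= z2)%N && (y == z2.+1)) ||
  [&& (z1 <= x)%N, (x < y)%N & (z2.+2 <= y <= n)%N].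

(* The general law for the triple (z1,z2,n) with parameters
   alpha_i = a i, gamma_j = g j, beta_{k l} = b k l. *)
Definition general_law f n (eb : n.-tuple V) (z1 z2 : nat)
    (a g : nat -> C) (b : nat -> nat -> C) : Prop :=
  let e := bvec eb in let P := bcoord eb in
  [/\ (forall h, (3 <= h <= n)%N -> f (e 1%N) (e h) = e h.-1),
      (forall i, (i <= z2 - z1)%N ->
         f (e (z1 + i)%N) (e z2.+1) =
         \sum_(0 <= m < i.+1) a m.+1 *: e (i + 2 - m)%N),
      (forall j, (2 <= j <= n - z2)%N ->
         f (e z1) (e (z2 + j)%N) =
         a 1%N *: e j.+1 + \sum_(1 <= m < j) g m *: e (j + 1 - m)%N),
      (forall k l, (2 <= l <= n - z2)%N -> (1 <= k < z2 - z1 + l)%N ->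
         f (e (z1 + k)%N) (e (z2 + l)%N) =
         \sum_(2 <= h < (k + l).+1)
            P h (f (e (z1 + k - 1)%N) (e (z2 + l)%N)
                 + f (e (z1 + k)%N) (e (z2 + l - 1)%N)) *: e h.+1
         + b k l *: e 2%N)
    & (forall x y, (2 <= x)%N -> (x < y <= n)%N -> ~~ law_pair z1 z2 n x y ->
         f (e x) (e y) = 0)].

(* Hilbert polynomial in t = 'X_0, s = 'X_1; the sum is over 1 <= k,l <= n,
   which covers all nonzero terms since C^n g = 0 for filiform g. *)
Definition HP f n : {mpoly int[2]} :=
  \sum_(1 <= k < n.+1) \sum_(1 <= l < n.+1)
     (\dim (brsp f (lcs f k) (lcs f l)))%:R *:
       ('X_(inord 0) ^+ k * 'X_(inord 1) ^+ l).

End LieDefs.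

Definition tv : {mpoly int[2]} := 'X_(inord 0).
Definition sv : {mpoly int[2]} := 'X_(inord 1).

Definition HP0 (n : nat) : {mpoly int[2]} :=
  (n - 2)%:R *: (tv * sv) +
  \sum_(2 <= k < n.-1) (n - k - 1)%:R *: (tv ^+ k * sv + tv * sv ^+ k).

(* Main.v *)
Require Import Defs.
From HB Require Import structures.
From mathcomp Require Import all_boot all_order all_algebra.
From mathcomp Require Import mpoly.
From mathcomp Require Import ring zify.
Import Order.TTheory GRing.Theory Num.Theory.
Local Open Scope ring_scope.
Set Implicit Arguments. Unset Strict Implicit. Unset Printing Implicit Defensive.

Section Bil.
Variables (C : numClosedFieldType) (V : vectType C) (f : V -> V -> V).
Hypothesis fL : forall (c : C) x y z, f (c *: x + y) z = c *: f x z + f y z.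
Hypothesis fR : forall (c : C) x y z, f x (c *: y + z) = c *: f x y + f x z.
Hypothesis fA : forall x, f x x = 0.

Lemma fDl x y z : f (x + y) z = f x z + f y z.
Proof. by have := fL 1 x y z; rewrite !scale1r. Qed.
Lemma fDr x y z : f x (y + z) = f x y + f x z.
Proof. by have := fR 1 x y z; rewrite !scale1r. Qed.
Lemma f0l z : f 0 z = 0.
Proof. have h := fDl 0 0 z; rewrite addr0 in h. by apply: (addrI (f 0 z)); rewrite addr0 -h. Qed.
Lemma f0r z : f z 0 = 0.
Proof. have h := fDr z 0 0; rewrite addr0 in h. by apply: (addrI (f z 0)); rewrite addr0 -h. Qed.
Lemma fZl c x z : f (c *: x) z = c *: f x z.
Proof. by rewrite -[c *: x]addr0 fL f0l addr0. Qed.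
Lemma fZr c x z : f z (c *: x) = c *: f z x.
Proof. by rewrite -[c *: x]addr0 fR f0r addr0. Qed.
Lemma fNl x z : f (- x) z = - f x z.
Proof. by rewrite -scaleN1r fZl scaleN1r. Qed.
Lemma fNr x z : f z (- x) = - f z x.
Proof. by rewrite -scaleN1r fZr scaleN1r. Qed.
Lemma fanti x y : f x y = - f y x.
Proof.
apply/eqP; rewrite -subr_eq0 opprK; apply/eqP.
have := fA (x + y); rewrite fDl !fDr !fA add0r addr0 => ->; by [].
Qed.
Lemma fsuml I (r : seq I) (P : pred I) F z :
  f (\sum_(i <- r | P i) F i) z = \sum_(i <- r | P i) f (F i) z.
Proof.
elim: r => [|i r IH]; first by rewrite !big_nil f0l.
by rewrite !big_cons; case: (P i); rewrite ?fDl IH.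
Qed.
Lemma fsumr I (r : seq I) (P : pred I) F z :
  f z (\sum_(i <- r | P i) F i) = \sum_(i <- r | P i) f z (F i).
Proof.
elim: r => [|i r IH]; first by rewrite !big_nil f0r.
by rewrite !big_cons; case: (P i); rewrite ?fDr IH.
Qed.

Lemma brL (s t : seq V) u w : u \in <<s>>%VS -> w \in <<t>>%VS ->
  f u w \in <<[seq f x y | x <- s, y <- t]>>%VS.
Proof.
move=> /(@coord_span _ _ _ (in_tuple s)) -> /(@coord_span _ _ _ (in_tuple t)) ->.
rewrite fsuml; apply: memv_suml => i _; rewrite fZl; apply: memvZ.
rewrite fsumr; apply: memv_suml => j _; rewrite fZr; apply: memvZ.
apply: memv_span; apply: allpairs_f; exact: mem_nth.
Qed.

Lemma span_vbasis (U : {vspace V}) : (<<vbasis U>> = U)%VS.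
Proof. by have /andP[/eqP] := vbasisP U. Qed.

Lemma mem_brsp (U W : {vspace V}) u w : u \in U -> w \in W -> f u w \in brsp f U W.
Proof. by rewrite -{1}(span_vbasis U) -{1}(span_vbasis W); apply: brL. Qed.

Lemma brsp_le (U W : {vspace V}) (S : {vspace V}) :
  (forall u w, u \in U -> w \in W -> f u w \in S) -> (brsp f U W <= S)%VS.
Proof.
move=> H; apply/span_subvP => v /allpairsP [[x y] /= [xU yW ->]].
by apply: H; apply: vbasis_mem.
Qed.

Lemma span_br s t (S : {vspace V}) :
  (forall x y, x \in s -> y \in t -> f x y \in S) ->
  forall u w, u \in <<s>>%VS -> w \in <<t>>%VS -> f u w \in S.
Proof.
move=> H u w us wt; have := brL us wt; apply/subvP/span_subvP.
by move=> v /allpairsP [[x y] /= [xs yt ->]]; apply: H.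
Qed.

Lemma brspC (U W : {vspace V}) : brsp f U W = brsp f W U.
Proof.
apply: subv_anti; rewrite !brsp_le // => u w uU wW;
by rewrite fanti memvN mem_brsp.
Qed.

Lemma brspS (U U' W W' : {vspace V}) : (U <= U')%VS -> (W <= W')%VS ->
  (brsp f U W <= brsp f U' W')%VS.
Proof.
move=> /subvP sU /subvP sW; apply: brsp_le => u w uU wW.
by apply: mem_brsp; [apply: sU | apply: sW].
Qed.

Lemma brsp0 (W : {vspace V}) : brsp f 0 W = 0%VS.
Proof.
by apply/eqP; rewrite -subv0; apply: brsp_le => u w; rewrite memv0 => /eqP-> _; rewrite f0l mem0v.
Qed.

End Bil.

Section Coord.
Variables (C : numClosedFieldType) (V : vectType C) (n : nat) (eb : n.-tuple V).

Lemma bcoordD j u v : bcoord eb j (u + v) = bcoord eb j u + bcoord eb j v.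
Proof. by rewrite /bcoord; case: insubP => [i _ _|_] /=; rewrite ?linearD ?addr0. Qed.
Lemma bcoordZ j c u : bcoord eb j (c *: u) = c * bcoord eb j u.
Proof. by rewrite /bcoord; case: insubP => [i _ _|_] /=; rewrite ?linearZ ?mulr0. Qed.
Lemma bcoordN j u : bcoord eb j (- u) = - bcoord eb j u.
Proof. by rewrite -scaleN1r bcoordZ mulN1r. Qed.
Lemma bcoord0 j : bcoord eb j 0 = 0.
Proof. by rewrite -(scale0r (0 : V)) bcoordZ mul0r. Qed.

Lemma bcoord_e j h : free eb -> (1 <= j)%N -> (1 <= h <= n)%N ->
  bcoord eb j (bvec eb h) = (j == h)%:R.
Proof.
move=> Fr j1 /andP[h1 hn]; rewrite /bcoord /bvec.
have hi : (h.-1 < n)%N by lia.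
case: insubP => [i ij ei|] /=.
  rewrite (_ : nth 0 eb h.-1 = eb`_(Ordinal hi)) // coord_free //.
  rewrite -val_eqE /= ei; case: eqP => E; case: eqP => Ejh //; exfalso; lia.
move=> nj; case: eqP => // E; exfalso; move: nj; rewrite E; lia.
Qed.

Lemma bcoord_ord (i : 'I_n) u : bcoord eb i.+1 u = coord eb i u.
Proof.
rewrite /bcoord /=; case: insubP => [k _ ek|] /=; last by rewrite ltn_ord.
by congr (coord _ _ _); apply: val_inj.
Qed.

Lemma vec_eq u v : basis_of fullv eb ->
  (forall j, (1 <= j <= n)%N -> bcoord eb j u = bcoord eb j v) -> u = v.
Proof.
move=> B H.
rewrite (coord_basis B (memvf u)) (coord_basis B (memvf v)).
apply: eq_bigr => i _; rewrite -!bcoord_ord H //; apply/andP; split => //.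
Qed.

Lemma free_iota i m : free eb -> (1 <= i)%N -> (i + m <= n.+1)%N ->
  free [seq bvec eb h | h <- iota i m].
Proof.
move=> Fr i1 im.
have -> : [seq bvec eb h | h <- iota i m] = take m (drop i.-1 eb).
  apply: (@eq_from_nth _ 0).
    by rewrite size_map size_iota size_take size_drop size_tuple; case: ltnP => //; lia.
  move=> k; rewrite size_map size_iota => km.
  rewrite (nth_map 0%N) ?size_iota // nth_iota // nth_take // nth_drop /bvec.
  congr nth; lia.
move: Fr; rewrite -[X in free X -> _](cat_take_drop i.-1) => /catr_free.
by rewrite -[X in free X -> _](cat_take_drop m) => /catl_free.
Qed.

Lemma dim_free (X : seq V) : free X -> \dim <<X>> = size X.
Proof. by move/eqP. Qed.

End Coord.

Definition D (k l : nat) : nat := match k, l with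
| 1, 1 => 7 | 1, 2 => 6 | 1, 3 => 5 | 1, 4 => 4 | 1, 5 => 3 | 1, 6 => 2 | 1, 7 => 1
| 2, 1 => 6 | 3, 1 => 5 | 4, 1 => 4 | 5, 1 => 3 | 6, 1 => 2 | 7, 1 => 1
| 2, 2 => 3 | 2, 3 => 3 | 3, 2 => 3 | 2, 4 => 2 | 4, 2 => 2 | 2, 5 => 1 | 5, 2 => 1
| 3, 3 => 1 | 3, 4 => 1 | 4, 3 => 1
| _, _ => 0 end.

Lemma sum9 (M : nmodType) (F : nat -> M) :
  \sum_(1 <= k < 10) F k = F 1%N + F 2%N + F 3%N + F 4%N + F 5%N + F 6%N + F 7%N + F 8%N + F 9%N.
Proof. by do 9 rewrite big_ltn //; rewrite big_geq // addr0 !addrA. Qed.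
Lemma gen (R : comNzRingType) (X Y : R) :
  \sum_(1 <= k < 10) \sum_(1 <= l < 10) (D k l)%:R * (X ^+ k * Y ^+ l) =
  7%:R * (X * Y) +
  (6%:R * (X ^+ 2 * Y + X * Y ^+ 2) + 5%:R * (X ^+ 3 * Y + X * Y ^+ 3) +
   4%:R * (X ^+ 4 * Y + X * Y ^+ 4) + 3%:R * (X ^+ 5 * Y + X * Y ^+ 5) +
   2%:R * (X ^+ 6 * Y + X * Y ^+ 6) + 1%:R * (X ^+ 7 * Y + X * Y ^+ 7)) +
  (3%:R * (X ^+ 2 * Y ^+ 2 + X ^+ 2 * Y ^+ 3 + X ^+ 3 * Y ^+ 2)
      + 2%:R * (X ^+ 2 * Y ^+ 4 + X ^+ 4 * Y ^+ 2)
      + (X ^+ 2 * Y ^+ 5 + X ^+ 5 * Y ^+ 2)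
      + (X ^+ 3 * Y ^+ 3 + X ^+ 3 * Y ^+ 4 + X ^+ 4 * Y ^+ 3)).
Proof.
rewrite sum9. rewrite !sum9. rewrite /D. ring.
Qed.

Lemma sum6 (M : nmodType) (F : nat -> M) :
  \sum_(2 <= k < 8) F k = F 2%N + F 3%N + F 4%N + F 5%N + F 6%N + F 7%N.
Proof. by do 6 rewrite big_ltn //; rewrite big_geq // addr0 !addrA. Qed.

Lemma HP0_9 : HP0 9 = 7%:R *: (tv * sv) +
  (6%:R *: (tv ^+ 2 * sv + tv * sv ^+ 2) + 5%:R *: (tv ^+ 3 * sv + tv * sv ^+ 3) +
   4%:R *: (tv ^+ 4 * sv + tv * sv ^+ 4) + 3%:R *: (tv ^+ 5 * sv + tv * sv ^+ 5) +
   2%:R *: (tv ^+ 6 * sv + tv * sv ^+ 6) + 1%:R *: (tv ^+ 7 * sv + tv * sv ^+ 7)).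
Proof. by rewrite /HP0 sum6. Qed.

Lemma HPfin (P : {mpoly int[2]}) :
  P = \sum_(1 <= k < 10) \sum_(1 <= l < 10) (D k l)%:R * (tv ^+ k * sv ^+ l) ->
  P - HP0 9 =
      3 *: (tv ^+ 2 * sv ^+ 2 + tv ^+ 2 * sv ^+ 3 + tv ^+ 3 * sv ^+ 2)
      + 2 *: (tv ^+ 2 * sv ^+ 4 + tv ^+ 4 * sv ^+ 2)
      + (tv ^+ 2 * sv ^+ 5 + tv ^+ 5 * sv ^+ 2)
      + (tv ^+ 3 * sv ^+ 3 + tv ^+ 3 * sv ^+ 4 + tv ^+ 4 * sv ^+ 3).
Proof.
move=> ->. rewrite (gen tv sv). rewrite HP0_9. rewrite !scaler_nat. ring.
Qed.

Ltac xsum := repeat first [ rewrite big_geq; last by [] | rewrite big_ltn; last by [] ].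
Ltac nnorm := rewrite /subn /addn /=.

Section Main.
Variables (C : numClosedFieldType) (V : vectType C) (f : V -> V -> V)
  (eb : 9.-tuple V) (a g : nat -> C) (b : nat -> nat -> C).
Hypothesis fL : forall (c : C) x y z, f (c *: x + y) z = c *: f x z + f y z.
Hypothesis fR : forall (c : C) x y z, f x (c *: y + z) = c *: f x y + f x z.
Hypothesis fA : forall x, f x x = 0.
Hypothesis fJ : forall x y z, f x (f y z) + f y (f z x) + f z (f x y) = 0.
Hypothesis Hfil : filiform f 9.
Hypothesis Had : adapted_basis f eb.
Hypothesis Hz2 : is_z2 f eb 6.
Hypothesis Hlaw : general_law f eb 5 6 a g b.
Local Notation e := (bvec eb).

Lemma Bas : basis_of fullv eb. Proof. by case: Had. Qed.
Lemma Fr : free eb. Proof. exact: basis_free Bas. Qed.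

Definition tab (x y : nat) : V := match x, y with
| 5, 7 => a 1 *: e 2
| 6, 7 => a 2 *: e 2 + a 1 *: e 3
| 5, 8 => g 1 *: e 2 + a 1 *: e 3
| 6, 8 => b 1 2 *: e 2 + (g 1 + a 2) *: e 3 + (2 * a 1) *: e 4
| 7, 8 => b 2 2 *: e 2 + b 1 2 *: e 3 + (g 1 + a 2) *: e 4 + (2 * a 1) *: e 5
| 5, 9 => g 2 *: e 2 + g 1 *: e 3 + a 1 *: e 4
| 6, 9 => b 1 3 *: e 2 + (g 2 + b 1 2) *: e 3 + (2 * g 1 + a 2) *: e 4
          + (3 * a 1) *: e 5
| 7, 9 => b 2 3 *: e 2 + (b 1 3 + b 2 2) *: e 3 + (g 2 + 2 * b 1 2) *: e 4
          + (3 * g 1 + 2 * a 2) *: e 5 + (5 * a 1) *: e 6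
| 8, 9 => b 3 3 *: e 2 + b 2 3 *: e 3 + (b 1 3 + b 2 2) *: e 4
          + (g 2 + 2 * b 1 2) *: e 5 + (3 * g 1 + 2 * a 2) *: e 6 + (5 * a 1) *: e 7
| _, _ => 0
end.

Ltac vsolve := apply: vec_eq; first exact: Bas;
  let j := fresh "j" in let j1 := fresh "j1" in let j9 := fresh "j9" in
  move=> j /andP[j1 j9];
  rewrite !(bcoordD, bcoordZ, bcoordN, bcoord0) !(bcoord_e Fr) //;
  move: j j1 j9; do 10 (case; first (by move=> /= *; ring)); by [].

Lemma E_up x y : (2 <= x)%N -> (x < y <= 9)%N -> f (e x) (e y) = tab x y.
Proof.
case: Hlaw => L1 L2 L3 L4 L5.
have E57 : f (e 5) (e 7) = tab 5 7.
  by move: (L2 0 isT); rewrite big_nat1.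
have E67 : f (e 6) (e 7) = tab 6 7.
  move: (L2 1 isT); xsum; nnorm => ->; vsolve.
have E58 : f (e 5) (e 8) = tab 5 8.
  move: (L3 2 isT); xsum; nnorm => ->; vsolve.
have E59 : f (e 5) (e 9) = tab 5 9.
  move: (L3 3 isT); xsum; nnorm => ->; vsolve.
have E68 : f (e 6) (e 8) = tab 6 8.
  move: (L4 1 2 isT isT); nnorm; rewrite E58 E67 /=; xsum => ->; vsolve.
have E78 : f (e 7) (e 8) = tab 7 8.
  move: (L4 2 2 isT isT); nnorm; rewrite E68 fA /=; xsum => ->; vsolve.
have E69 : f (e 6) (e 9) = tab 6 9.
  move: (L4 1 3 isT isT); nnorm; rewrite E59 E68 /=; xsum => ->; vsolve.
have E79 : f (e 7) (e 9) = tab 7 9.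
  move: (L4 2 3 isT isT); nnorm; rewrite E69 E78 /=; xsum => ->; vsolve.
have E89 : f (e 8) (e 9) = tab 8 9.
  move: (L4 3 3 isT isT); nnorm; rewrite E79 fA /=; xsum => ->; vsolve.
move: x y.
case=> [|[|[|[|[|[|[|[|[|[|x]]]]]]]]]]; case=> [|[|[|[|[|[|[|[|[|[|y]]]]]]]]]] //.
all: try (by move=> _ /andP[]).
all: move=> _ _; first [exact E57 | exact E67 | exact E58 | exact E68 | exact E78
  | exact E59 | exact E69 | exact E79 | exact E89 | by apply: L5].
Qed.

Definition tabf x y := if (x < y)%N then tab x y else - tab y x.

Lemma tab_diag x : tab x x = 0.
Proof. by do 10 (case: x => [|x] //). Qed.

Lemma fe x y : (2 <= x <= 9)%N -> (2 <= y <= 9)%N -> f (e x) (e y) = tabf x y.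
Proof.
move=> /andP[x2 x9] /andP[y2 y9]; rewrite /tabf.
case: ltngtP => xy.
- by apply: E_up => //; rewrite xy.
- by rewrite (fanti fL fR fA) E_up //; rewrite xy.
- by rewrite xy fA tab_diag oppr0.
Qed.
Ltac jac x y z j := have := congr1 (bcoord eb j) (fJ (e x) (e y) (e z));
  rewrite !fe // /tabf /= !(fDr fR, fZr fR, fNr fR, f0r fR) !fe // /tabf /=
    !(bcoordD, bcoordZ, bcoordN, bcoord0) !(bcoord_e Fr) //=.

Lemma Ha1 : a 1 = 0.
Proof.
jac 6%N 7%N 9%N 2%N => H.
have : (3%:R : C) * (a 1 * a 1) = 0 by rewrite -H; ring.
by move/eqP; rewrite mulf_eq0 pnatr_eq0 /= mulf_eq0 orbb => /eqP.
Qed.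

Lemma Hag : (2 * a 2 + 3 * g 1) * (a 2 - g 1) = 0.
Proof.
jac 7%N 8%N 9%N 2%N => H; rewrite Ha1 in H; rewrite -[RHS]oppr0 -H; ring.
Qed.

Lemma sq0 (x : C) k : (0 < k)%N -> k%:R * (x * x) = 0 -> x = 0.
Proof.
move=> k0 /eqP; rewrite mulf_eq0 pnatr_eq0 mulf_eq0 orbb.
by case/orP => [/eqP k00|/eqP //]; rewrite k00 in k0.
Qed.

Lemma Ha2 : a 2 != 0.
Proof.
case: Hz2 => _ H _; move: H; rewrite fe // /tabf /= Ha1 scale0r addr0.
by apply: contraNneq => ->; rewrite scale0r.
Qed.

Lemma Hg1 : g 1 != 0.
Proof.
apply/eqP => g0; move/eqP: Ha2; apply; apply: (@sq0 _ 2%N) => //.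
by rewrite -Hag g0; ring.
Qed.

Lemma Hga : g 1 + a 2 != 0.
Proof.
apply/eqP => ga; move/eqP: Hg1; apply; apply: (@sq0 _ 2%N) => //.
have E : a 2 = - g 1 by apply/eqP; rewrite -addr_eq0 addrC ga.
by rewrite -[RHS]oppr0 -Hag E; ring.
Qed.

Lemma memZ_inv (S : {vspace V}) c v : c != 0 -> c *: v \in S -> v \in S.
Proof. by move=> c0 /(memvZ c^-1); rewrite scalerA mulVf // scale1r. Qed.

Lemma lcsS1 k : (1 <= k)%N -> lcs f k.+1 = brsp f (lcs f k) fullv.
Proof. by case: k. Qed.

Lemma lcs_low k h : (1 <= k)%N -> (2 <= h)%N -> (h + k <= 10)%N -> e h \in lcs f k.
Proof.
elim: k h => // k IH h _ h2 hk.
case: k IH hk => [|k] IH hk; first exact: memvf.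
rewrite lcsS1 //.
have -> : e h = - f (e h.+1) (e 1).
  rewrite -(fanti fL fR fA); case: Had => _ H _ _; rewrite H //; lia.
rewrite memvN; apply: (mem_brsp fL fR); last exact: memvf.
apply: IH => //; lia.
Qed.

Lemma lcsE k : (2 <= k <= 9)%N -> lcs f k = <<[seq e h | h <- iota 2 (9 - k)]>>%VS.
Proof.
move=> kr; apply/eqP; rewrite eq_sym eqEdim; apply/andP; split.
  apply/span_subvP => v /mapP [h]; rewrite mem_iota => hr ->.
  apply: lcs_low; lia.
case: Hfil => _ [_ ->] //.
by rewrite dim_free ?size_map ?size_iota // free_iota //; [exact: Fr | lia].
Qed.

Lemma lcs_aux_dec k : (lcs_aux f k.+1 <= lcs_aux f k)%VS.
Proof.
elim: k => [|k IH]; first exact: subvf.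
by apply: (brspS fL fR) => //; exact: subvv.
Qed.

Lemma lcs_dec k m : (1 <= k <= m)%N -> (lcs f m <= lcs f k)%VS.
Proof.
move=> /andP[k1 km]; rewrite /lcs.
have -> : m.-1 = (k.-1 + (m - k))%N by lia.
elim: (m - k)%N => [|d IH]; first by rewrite addn0 subvv.
by rewrite addnS; apply: subv_trans IH; apply: lcs_aux_dec.
Qed.

Lemma lcs10 : lcs f 10 = 0%VS.
Proof. by rewrite lcsS1 // lcsE // span_nil (brsp0 fL). Qed.

Lemma all2P (s t : seq V) (S : {vspace V}) :
  all (fun x => all (fun y => f x y \in S) t) s ->
  forall x y, x \in s -> y \in t -> f x y \in S.
Proof. by move=> /allP H x y xs yt; have /allP := H x xs; apply. Qed.

Ltac memt := rewrite ?(mulr0, mul0r, scale0r, addr0, add0r, oppr0, memvN);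
  repeat first [ apply: mem0v | apply: memvD | apply: memvZ | apply: memv_line
    | (apply: memv_span; rewrite !inE eqxx ?orbT //) ].

Ltac ub i j := apply: brsp_le => u w; rewrite (@lcsE i) // ?(@lcsE j) //;
  apply: (span_br fL fR); apply: all2P; nnorm;
  rewrite !fe // /tabf /= ?Ha1; repeat (apply/andP; split); memt; try by [].

Lemma R33u : (brsp f (lcs f 3) (lcs f 3) <= <[e 2]>)%VS.
Proof. ub 3%N 3%N. Qed.

Lemma Le2_67 i j : (1 <= i)%N -> (1 <= j)%N -> (6 + i <= 10)%N -> (7 + j <= 10)%N ->
  e 2 \in brsp f (lcs f i) (lcs f j).
Proof.
move=> i1 j1 hi hj.
have := mem_brsp fL fR (@lcs_low i 6 i1 isT hi) (@lcs_low j 7 j1 isT hj).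
by rewrite fe // /tabf /= Ha1 scale0r addr0; apply: memZ_inv Ha2.
Qed.

Lemma Le2_85 i j : (1 <= i)%N -> (1 <= j)%N -> (8 + i <= 10)%N -> (5 + j <= 10)%N ->
  e 2 \in brsp f (lcs f i) (lcs f j).
Proof.
move=> i1 j1 hi hj.
have := mem_brsp fL fR (@lcs_low i 8 i1 isT hi) (@lcs_low j 5 j1 isT hj).
by rewrite fe // /tabf /= Ha1 scale0r addr0 memvN; apply: memZ_inv Hg1.
Qed.

Lemma Le3_86 i j : (1 <= i)%N -> (1 <= j)%N -> (8 + i <= 10)%N -> (6 + j <= 10)%N ->
  e 3 \in brsp f (lcs f i) (lcs f j).
Proof.
move=> i1 j1 hi hj.
have := mem_brsp fL fR (@lcs_low i 8 i1 isT hi) (@lcs_low j 6 j1 isT hj).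
rewrite fe // /tabf /= Ha1 mulr0 scale0r addr0 memvN.
rewrite rpredDl; first exact: memZ_inv Hga.
by apply: memvZ; apply: Le2_85 => //; lia.
Qed.

Lemma Le4_87 i j : (1 <= i)%N -> (1 <= j)%N -> (8 + i <= 10)%N -> (7 + j <= 10)%N ->
  e 4 \in brsp f (lcs f i) (lcs f j).
Proof.
move=> i1 j1 hi hj.
have := mem_brsp fL fR (@lcs_low i 8 i1 isT hi) (@lcs_low j 7 j1 isT hj).
rewrite fe // /tabf /= Ha1 mulr0 scale0r addr0 memvN.
rewrite rpredDl; first exact: memZ_inv Hga.
apply: memvD; apply: memvZ; [apply: Le2_85 | apply: Le3_86] => //; lia.
Qed.

Lemma R33 : brsp f (lcs f 3) (lcs f 3) = <[e 2]>%VS.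
Proof.
apply/eqP; rewrite eqEsubv; apply/andP; split; first by ub 3%N 3%N.
by rewrite -memvE; apply: Le2_67.
Qed.

Lemma R34 : brsp f (lcs f 3) (lcs f 4) = <[e 2]>%VS.
Proof.
apply/eqP; rewrite eqEsubv; apply/andP; split; first by ub 3%N 4%N.
by rewrite -memvE (brspC fL fR fA); apply: Le2_67.
Qed.

Lemma R35 : brsp f (lcs f 3) (lcs f 5) = 0%VS.
Proof. by apply/eqP; rewrite -subv0; ub 3%N 5%N. Qed.

Lemma R26 : brsp f (lcs f 2) (lcs f 6) = 0%VS.
Proof. by apply/eqP; rewrite -subv0; ub 2%N 6%N. Qed.

Lemma R44 : brsp f (lcs f 4) (lcs f 4) = 0%VS.
Proof. by apply/eqP; rewrite -subv0; ub 4%N 4%N. Qed.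

Lemma R25 : brsp f (lcs f 2) (lcs f 5) = <[e 2]>%VS.
Proof.
apply/eqP; rewrite eqEsubv; apply/andP; split; first by ub 2%N 5%N.
by rewrite -memvE; apply: Le2_85.
Qed.

Lemma R24 : brsp f (lcs f 2) (lcs f 4) = <<[:: e 2; e 3]>>%VS.
Proof.
apply/eqP; rewrite eqEsubv; apply/andP; split; first by ub 2%N 4%N.
apply/span_subvP => v; rewrite !inE => /orP [] /eqP ->;
  [apply: Le2_85 | apply: Le3_86] => //.
Qed.

Lemma R22 : brsp f (lcs f 2) (lcs f 2) = <<[:: e 2; e 3; e 4]>>%VS.
Proof.
apply/eqP; rewrite eqEsubv; apply/andP; split; first by ub 2%N 2%N.
apply/span_subvP => v; rewrite !inE => /or3P [] /eqP ->;
  [apply: Le2_85 | apply: Le3_86 | apply: Le4_87] => //.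
Qed.

Lemma R23 : brsp f (lcs f 2) (lcs f 3) = <<[:: e 2; e 3; e 4]>>%VS.
Proof.
apply/eqP; rewrite eqEsubv; apply/andP; split; first by ub 2%N 3%N.
apply/span_subvP => v; rewrite !inE => /or3P [] /eqP ->;
  [apply: Le2_85 | apply: Le3_86 | apply: Le4_87] => //.
Qed.

Lemma d1 : \dim <[e 2]> = 1%N.
Proof.
have := dim_free (free_iota (i:=2) (m:=1) Fr isT isT).
by rewrite /= span_seq1.
Qed.
Lemma d2 : \dim <<[:: e 2; e 3]>> = 2%N.
Proof. exact: (dim_free (free_iota (i:=2) (m:=2) Fr isT isT)). Qed.
Lemma d3 : \dim <<[:: e 2; e 3; e 4]>> = 3%N.
Proof. exact: (dim_free (free_iota (i:=2) (m:=3) Fr isT isT)). Qed.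

Lemma brmono k l k' l' : (1 <= k' <= k)%N -> (1 <= l' <= l)%N ->
  (brsp f (lcs f k) (lcs f l) <= brsp f (lcs f k') (lcs f l'))%VS.
Proof. by move=> hk hl; apply: (brspS fL fR); apply: lcs_dec. Qed.

Lemma Rzero k l : (2 <= k)%N -> (2 <= l)%N ->
  [|| (6 <= l)%N, (6 <= k)%N, (3 <= k)%N && (5 <= l)%N,
      (5 <= k)%N && (3 <= l)%N | (4 <= k)%N && (4 <= l)%N] ->
  brsp f (lcs f k) (lcs f l) = 0%VS.
Proof.
move=> k2 l2 H; apply/eqP; rewrite -subv0.
case/or4P: H => [h|h|/andP[h1 h2]|/orP[/andP[h1 h2]|/andP[h1 h2]]].
- by rewrite -R26 brmono //; apply/andP.
- by rewrite (brspC fL fR fA) -R26 brmono //; apply/andP.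
- by rewrite -R35 brmono //; apply/andP.
- by rewrite (brspC fL fR fA) -R35 brmono //; apply/andP.
- by rewrite -R44 brmono //; apply/andP.
Qed.

Lemma D1 l : (1 <= l <= 9)%N -> \dim (brsp f (lcs f 1) (lcs f l)) = (9 - l.+1)%N.
Proof.
move=> /andP[l1 l9].
rewrite (brspC fL fR fA) (_ : lcs f 1 = fullv) // -lcsS1 //.
case: (ltngtP l 9) => [lt|gt|->]; last by rewrite lcs10 dimv0.
  by case: Hfil => _ [_ ->] //; apply/andP; split => //.
by move: l9; rewrite leqNgt gt.
Qed.

Lemma dimtab k l : (1 <= k <= 9)%N -> (1 <= l <= 9)%N ->
  \dim (brsp f (lcs f k) (lcs f l)) = D k l.
Proof.
move: k l.
case=> [|[|[|[|[|[|[|[|[|[|k]]]]]]]]]]; case=> [|[|[|[|[|[|[|[|[|[|l]]]]]]]]]] //.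
all: try (by move=> _ /andP[]).
all: try (by move=> /andP[]).
all: move=> _ _.
all: first [ by rewrite D1
  | by rewrite (brspC fL fR fA) D1
  | by rewrite R22 d3 | by rewrite R23 d3 | by rewrite (brspC fL fR fA) R23 d3
  | by rewrite R24 d2 | by rewrite (brspC fL fR fA) R24 d2
  | by rewrite R25 d1 | by rewrite (brspC fL fR fA) R25 d1
  | by rewrite R33 d1 | by rewrite R34 d1 | by rewrite (brspC fL fR fA) R34 d1
  | by rewrite Rzero // dimv0 ].
Qed.

Lemma HPval : HP f 9 = \sum_(1 <= k < 10) \sum_(1 <= l < 10) (D k l)%:R * (tv ^+ k * sv ^+ l).
Proof.
rewrite /HP; apply: eq_big_nat => k /andP[k1 k10]; apply: eq_big_nat => l /andP[l1 l10].
rewrite dimtab; last (apply/andP; split; lia); last (apply/andP; split; lia).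
by rewrite scaler_nat mulr_natl.
Qed.

Lemma final :
  let e := bvec eb in
  let Cs := lcs f in
  (a 1%N = 0 /\
      (2 * a 2%N + 3 * g 1%N) * (a 2%N - g 1%N) = 0 /\
      g 1%N != 0) /\
     ((
      brsp f (Cs 3%N) (Cs 3%N) = <[e 2%N]>%VS /\ brsp f (Cs 3%N) (Cs 4%N) = <[e 2%N]>%VS) /\
      brsp f (Cs 3%N) (Cs 5%N) = 0%VS /\
      brsp f (Cs 2%N) (Cs 6%N) = 0%VS /\
      brsp f (Cs 2%N) (Cs 5%N) = <[e 2%N]>%VS /\
      brsp f (Cs 2%N) (Cs 4%N) = << [:: e 2%N; e 3%N] >>%VS /\
      (
      brsp f (Cs 2%N) (Cs 2%N) = << [:: e 2%N; e 3%N; e 4%N] >>%VS /\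
      brsp f (Cs 2%N) (Cs 3%N) = << [:: e 2%N; e 3%N; e 4%N] >>%VS)) /\
    HP f 9 - HP0 9 =
      3 *: (tv ^+ 2 * sv ^+ 2 + tv ^+ 2 * sv ^+ 3 + tv ^+ 3 * sv ^+ 2)
      + 2 *: (tv ^+ 2 * sv ^+ 4 + tv ^+ 4 * sv ^+ 2)
      + (tv ^+ 2 * sv ^+ 5 + tv ^+ 5 * sv ^+ 2)
      + (tv ^+ 3 * sv ^+ 3 + tv ^+ 3 * sv ^+ 4 + tv ^+ 4 * sv ^+ 3).
Proof.
move=> e' Cs; rewrite /e' /Cs.
split; first by split; [exact: Ha1 | split; [exact: Hag | exact: Hg1]].
split; last by apply: HPfin; exact: HPval.
split; first by split; [exact: R33 | exact: R34].
split; first exact: R35.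
split; first exact: R26.
split; first exact: R25.
split; first exact: R24.
by split; [exact: R22 | exact: R23].
Qed.
End Main.

Theorem mainTheorem18 (C : numClosedFieldType) (V : vectType C)
  (f : V -> V -> V) (eb : 9.-tuple V)
  (a g : nat -> C) (b : nat -> nat -> C) :
  is_lie_bracket f ->
  filiform f 9 ->
  adapted_basis f eb ->
  is_z1 f eb 5 ->
  is_z2 f eb 6 ->
  general_law f eb 5 6 a g b ->
  let e := bvec eb in
  let Cs := lcs f in
  (a 1%N = 0 /\
      (2 * a 2%N + 3 * g 1%N) * (a 2%N - g 1%N) = 0 /\
      g 1%N != 0) /\
     ((
      brsp f (Cs 3%N) (Cs 3%N) = <[e 2%N]>%VS /\ brsp f (Cs 3%N) (Cs 4%N) = <[e 2%N]>%VS) /\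
      brsp f (Cs 3%N) (Cs 5%N) = 0%VS /\
      brsp f (Cs 2%N) (Cs 6%N) = 0%VS /\
      brsp f (Cs 2%N) (Cs 5%N) = <[e 2%N]>%VS /\
      brsp f (Cs 2%N) (Cs 4%N) = << [:: e 2%N; e 3%N] >>%VS /\
      (
      brsp f (Cs 2%N) (Cs 2%N) = << [:: e 2%N; e 3%N; e 4%N] >>%VS /\
      brsp f (Cs 2%N) (Cs 3%N) = << [:: e 2%N; e 3%N; e 4%N] >>%VS)) /\
    HP f 9 - HP0 9 =
      3 *: (tv ^+ 2 * sv ^+ 2 + tv ^+ 2 * sv ^+ 3 + tv ^+ 3 * sv ^+ 2)
      + 2 *: (tv ^+ 2 * sv ^+ 4 + tv ^+ 4 * sv ^+ 2)
      + (tv ^+ 2 * sv ^+ 5 + tv ^+ 5 * sv ^+ 2)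
      + (tv ^+ 3 * sv ^+ 3 + tv ^+ 3 * sv ^+ 4 + tv ^+ 4 * sv ^+ 3).
Proof.
move=> [fL fR fA fJ] Hfil Had _ Hz2 Hlaw.
exact: (final fL fR fA fJ Hfil Had Hz2 Hlaw).
Qed.
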